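(* In the setting described in the context, the service placement $X^\psi$ output by algorithm SA1 has total reward $\sum_{k\in U}f_\psi(k)w_k\ge\mathbb E\left[\sum_{k\in U}f_\tau(k)w_k\right]$, where the expectation is over the random slot allocation $\tau$.
   Context: An SPSC instance: finite sets $S$ (services), $V$ (nodes), $U$ (users); sizes $s_i>0$; capacities $c_j>0$; for each user $k$ a service $i_k\in S$, a set $T_k\subseteq V$, a reward $w_k>0$. Total reward of a placement $X=\{X_i\subseteq V\}$: $\sum_kw_k\mathbf 1[T_k\cap X_{i_k}\ne\emptyset]$. Let $\{x_{ij}\},\{y_k\}$ be an optimal solution of the LP with nonnegative variables: maximize $\sum_ky_kw_k$ s.t. $y_k\le\sum_{j\in T_k}x_{i_kj}$, $y_k\le1$; $\sum_ix_{ij}s_i\le c_j$; $x_{ij}=0$ if $s_i>c_j$; $0\le x_{ij}\le1$. Fix $\beta<1$ with $\max_is_i\le\beta\min_jc_j$; $\gamma:=1-\sqrt\beta$, $\delta:=(1-\sqrt\beta)^2$, $\mathbb N=\{1,2,\dots\}$. For $j\in V,q\in\mathbb N$: $P_j^q:=\{i:\gamma^qc_j\beta<s_i\le\gamma^{q-1}c_j\beta\}$, $d_j^q:=\sum_{i\in P_j^q}x_{ij}$, $v_j:=\delta c_j/\sum_is_ix_{ij}$, $n_j^q:=\lceil v_jd_j^q\rceil$. Slot set $\Lambda$: for every $j,q$ with $P_j^q\ne\emptyset$, $n_j^q$ slots $\sigma$ with node $\nu(\sigma)=j$, class $\kappa(\sigma)=q$. A slot allocation is $\tau:\Lambda\to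 S$ with $\tau(\sigma)\in P^{\kappa(\sigma)}_{\nu(\sigma)}$; $X^\tau_i:=\{j:\exists\sigma,\nu(\sigma)=j,\tau(\sigma)=i\}$; $f_\tau(k):=\mathbf 1[T_k\cap X^\tau_{i_k}\ne\emptyset]$. Random slot allocation: each slot $\sigma$ independently gets $\tau(\sigma)=i$ with probability $x_{i\nu(\sigma)}/d^{\kappa(\sigma)}_{\nu(\sigma)}$, $i\in P^{\kappa(\sigma)}_{\nu(\sigma)}$. A partial slot allocation is $\tau':\Lambda\to S\cup\{\emptyset\}$ with $\tau'(\sigma)\in P^{\kappa(\sigma)}_{\nu(\sigma)}\cup\{\emptyset\}$; $A(\tau')$ is the set of slot allocations agreeing with $\tau'$ wherever $\tau'(\sigma)\ne\emptyset$; $E(\tau'):=\mathbb E[\sum_kf_\tau(k)w_k\mid\tau\in A(\tau')]$. Algorithm SA1: start with $\tau'(\sigma)=\emptyset$ for all $\sigma$; process the slots one at a time; for the current slot $\sigma$ and each $i\in P^{\kappa(\sigma)}_{\nu(\sigma)}$ let $\tau'_i$ be $\tau'$ with $\sigma$ assigned $i$, choose $i'$ maximizing $E(\tau'_i)$, set $\tau'(\sigma):=i'$. When all slots are assigned let $\psi:=\tau'$ and output $X^\psi$. *)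

(* Defs.v *)
From mathcomp Require Import all_boot all_order all_algebra.
From mathcomp Require Import reals.
Set Implicit Arguments. Unset Strict Implicit. Unset Printing Implicit Defensive.
Import Order.TTheory GRing.Theory Num.Theory.
Local Open Scope ring_scope.

Section SPSC.
Variables (R : realType) (S V U : finType).
(* sizes, capacities, requested service, node sets and rewards of users *)
Variables (s : S -> R) (c : V -> R) (serv : U -> S) (T : U -> {set V}) (w : U -> R).

Definition LP_feasible (x : S -> V -> R) (y : U -> R) : Prop :=
  [/\ forall i j, 0 <= x i j,
      forall i j, x i j <= 1,
      forall k, 0 <= y k
    & forall k, y k <= 1] /\
   [/\ forall k, y k <= \sum_(j in T k) x (serv k) j,
      forall j, \sum_i x i j * s i <= c j
    & forall i j, c j < s i -> x i j = 0].

Definition LP_value (y : U -> R) : R := \sum_k y k * w k.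

Definition LP_optimal (x : S -> V -> R) (y : U -> R) : Prop :=
  LP_feasible x y /\
  forall x' y', LP_feasible x' y' -> LP_value y' <= LP_value y.

Variables (x : S -> V -> R) (beta : R).

Definition gamma : R := 1 - Num.sqrt beta.
Definition delta : R := (1 - Num.sqrt beta) ^+ 2.

(* P_j^q, for q >= 1 *)
Definition Pcls (j : V) (q : nat) : {set S} :=
  [set i | (gamma ^+ q * c j * beta < s i) && (s i <= gamma ^+ q.-1 * c j * beta)].

Definition dcls (j : V) (q : nat) : R := \sum_(i in Pcls j q) x i j.

Definition vnode (j : V) : R := delta * c j / (\sum_i s i * x i j).

Definition ncls (j : V) (q : nat) : nat := `|Num.ceil (vnode j * dcls j q)|%N.

Variables (L : finType) (nu : L -> V) (kappa : L -> nat).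

Definition valid_slots : Prop :=
  (forall sg, (0 < kappa sg)%N) /\
  forall j q, (0 < q)%N ->
    #|[set sg | (nu sg == j) && (kappa sg == q)]| =
      (if Pcls j q != set0 then ncls j q else 0%N).

Definition placement (tau : {ffun L -> S}) (i : S) : {set V} :=
  [set j | [exists sg, (nu sg == j) && (tau sg == i)]].

Definition total_reward (X : S -> {set V}) : R :=
  \sum_k w k * ((T k :&: X (serv k)) != set0)%:R.

Definition reward (tau : {ffun L -> S}) : R := total_reward (placement tau).

Definition slot_prob (sg : L) (i : S) : R :=
  if i \in Pcls (nu sg) (kappa sg) then x i (nu sg) / dcls (nu sg) (kappa sg) else 0.

Definition exp_random : R :=
  \sum_(tau : {ffun L -> S}) (\prod_sg slot_prob sg (tau sg)) * reward tau.

(* A partial slot allocation: None stands for the empty assignment. *)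
Definition agrees (tp : {ffun L -> option S}) (tau : {ffun L -> S}) : bool :=
  [forall sg, (tp sg == None) || (tp sg == Some (tau sg))].

(* E(tau') : expected reward when the assigned slots are fixed as in tau' and
   the unassigned slots are drawn independently as in the random allocation. *)
Definition cond_exp (tp : {ffun L -> option S}) : R :=
  \sum_(tau : {ffun L -> S} | agrees tp tau)
     (\prod_(sg | tp sg == None) slot_prob sg (tau sg)) * reward tau.

Definition restrict (psi : {ffun L -> S}) (done : seq L) : {ffun L -> option S} :=
  [ffun sg => if sg \in done then Some (psi sg) else None].

Definition assign (tp : {ffun L -> option S}) (sg : L) (i : S) : {ffun L -> option S} :=
  [ffun sg' => if sg' == sg then Some i else tp sg'].

(* psi is a possible final allocation of SA1 when the slots are processed in
   the order [ord] (with any tie-breaking among maximizers): when slot sg is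
   processed, the current partial allocation is psi restricted to the slots
   processed before it, and psi sg is a maximizer of E(tau'_i) over
   i in P_{nu sg}^{kappa sg}. *)
Definition SA1_output (ord : seq L) (psi : {ffun L -> S}) : Prop :=
  forall pre sg post, ord = pre ++ sg :: post ->
    psi sg \in Pcls (nu sg) (kappa sg) /\
    forall i, i \in Pcls (nu sg) (kappa sg) ->
      cond_exp (assign (restrict psi pre) sg i)
        <= cond_exp (assign (restrict psi pre) sg (psi sg)).

End SPSC.

(* Main.v *)
Require Import Defs.
From mathcomp Require Import all_boot all_order all_algebra.
From mathcomp Require Import reals.
Import Order.TTheory GRing.Theory Num.Theory.
Local Open Scope ring_scope.

Section Proof.
Variables (R : realType) (S V U : finType)
    (s : S -> R) (c : V -> R) (serv : U -> S) (T : U -> {set V}) (w : U -> R)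
    (x : S -> V -> R) (beta : R)
    (L : finType) (nu : L -> V) (kappa : L -> nat).

Local Notation p := (slot_prob s c x beta nu kappa).
Local Notation E := (cond_exp s c serv T w x beta nu kappa).
Local Notation rw := (reward serv T w nu).

Lemma decomp (tp : {ffun L -> option S}) sg : tp sg = None ->
  E tp = \sum_i p sg i * E (assign tp sg i).
Proof.
move=> Hn; rewrite /cond_exp (partition_big (fun tau : {ffun L -> S} => tau sg) predT) //=.
apply: eq_bigr => i _; rewrite mulr_sumr.
have Hag : forall tau, agrees (assign tp sg i) tau = agrees tp tau && (tau sg == i).
  move=> tau; rewrite /agrees; apply/forallP/andP.
  - move=> H; split.
      apply/forallP => sg'; have := H sg'; rewrite ffunE.
      case: (sg' =P sg) => [->|_] //=; by rewrite Hn.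
    by have := H sg; rewrite ffunE eqxx /= => /eqP [->].
  - case=> /forallP H /eqP <- sg'; rewrite ffunE; case: (sg' =P sg) => [->|_]; first by rewrite eqxx orbT.
    exact: H.
rewrite [RHS](eq_bigl _ _ Hag); apply: eq_bigr => tau /andP [_ /eqP Hi].
rewrite mulrA; congr (_ * _).
rewrite (bigD1 sg) ?Hn //= Hi; congr (_ * _).
apply: eq_bigl => sg'; rewrite ffunE; by case: (sg' =P sg) => [->|_]; rewrite /= ?andbF ?andbT.
Qed.

Lemma step (tp : {ffun L -> option S}) sg (P : {set S}) M :
  tp sg = None ->
  (forall i, 0 <= p sg i) ->
  (forall i, i \notin P -> p sg i = 0) ->
  \sum_i p sg i = 1 ->
  (forall i, i \in P -> E (assign tp sg i) <= M) ->
  E tp <= M.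
Proof.
move=> Hn H0 Hout H1 HM; rewrite (@decomp tp sg Hn).
apply: (@le_trans _ _ (\sum_i p sg i * M)); last by rewrite -mulr_suml H1 mul1r.
apply: ler_sum => i _; case: (boolP (i \in P)) => Hi.
  by apply: ler_wpM2l; [exact: H0 | exact: HM].
by rewrite Hout // !mul0r.
Qed.



Lemma E_nil (psi : {ffun L -> S}) : E (restrict psi [::]) = exp_random s c serv T w x beta nu kappa.
Proof.
rewrite /cond_exp /exp_random; rewrite (eq_bigl predT); last first.
  by move=> tau; apply/forallP => sg; rewrite ffunE.
apply: eq_bigr => tau _; congr (_ * _); apply: eq_bigl => sg; by rewrite ffunE.
Qed.

Lemma E_all (psi : {ffun L -> S}) (ord : seq L) : (forall sg, sg \in ord) ->
  E (restrict psi ord) = rw psi.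
Proof.
move=> Hall; rewrite /cond_exp (eq_bigl (pred1 psi)); last first.
  move=> tau /=; apply/forallP/eqP => [H|->].
    apply/ffunP => sg; have := H sg; rewrite ffunE Hall /=.
    by move/eqP => [->].
  by move=> sg; rewrite ffunE Hall eqxx orbT.
rewrite big_pred1_eq big_pred0 ?mul1r // => sg; by rewrite ffunE Hall.
Qed.


Lemma assign_restrict (psi : {ffun L -> S}) pre sg :
  assign (restrict psi pre) sg (psi sg) = restrict psi (rcons pre sg).
Proof.
apply/ffunP => sg'; rewrite !ffunE mem_rcons in_cons.
by case: (sg' =P sg) => [->|_] //=; rewrite ffunE.
Qed.

Lemma main (y : U -> R) (ord : seq L) (psi : {ffun L -> S}) :
  LP_optimal s c serv T w x y ->
  valid_slots s c x beta nu kappa ->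
  uniq ord -> (forall sg, sg \in ord) ->
  SA1_output s c serv T w x beta nu kappa ord psi ->
  exp_random s c serv T w x beta nu kappa <= total_reward serv T w (placement nu psi).
Proof.
move=> [[[Hx0 _ _ _] _] _] [Hk Hv] Hu Hall Hsa.
have Hd : forall sg, dcls s c x beta (nu sg) (kappa sg) != 0.
  move=> sg; apply/eqP => Hd0.
  have := Hv (nu sg) (kappa sg) (Hk sg).
  have : (0 < #|[set sg' | (nu sg' == nu sg) && (kappa sg' == kappa sg)]|)%N.
    by apply/card_gt0P; exists sg; rewrite inE !eqxx.
  move=> Hpos Hc; rewrite Hc in Hpos.
  move: Hpos; case: ifP => // _.
  by rewrite /ncls Hd0 mulr0 ceil0.
have Hp0 : forall sg i, 0 <= p sg i.
  move=> sg i; rewrite /slot_prob; case: ifP => // _.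
  apply: divr_ge0 => //; rewrite /dcls; apply: sumr_ge0 => j _; exact: Hx0.
have Hp1 : forall sg, \sum_i p sg i = 1.
  move=> sg; rewrite /slot_prob -big_mkcond /= -mulr_suml -/(dcls s c x beta _ _).
  exact: mulfV.
have key : forall n, (n <= size ord)%N ->
    E (restrict psi [::]) <= E (restrict psi (take n ord)).
  elim => [|n IH] Hn; first by rewrite take0.
  have x0 : L by case: (ord) Hn.
  set sg := nth x0 ord n.
  have Hord : ord = take n ord ++ sg :: drop n.+1 ord by rewrite -drop_nth // cat_take_drop.
  have [Hin Hmax] := Hsa _ _ _ Hord.
  apply: le_trans (IH (ltnW Hn)) _.
  rewrite (take_nth x0 Hn) -/sg -assign_restrict.
  apply: (@step _ sg (Pcls s c beta (nu sg) (kappa sg))) => //.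
  - rewrite ffunE; case: ifP => // Hm.
    move: Hu; rewrite Hord cat_uniq => /and3P [_ /hasPn H _].
    by have /negP := H sg (mem_head _ _).
  - by move=> i Hi; rewrite /slot_prob (negbTE Hi).
have := key _ (leqnn (size ord)).
by rewrite take_size E_nil E_all.
Qed.

End Proof.
Theorem theorem6 (R : realType) (S V U : finType)
    (s : S -> R) (c : V -> R) (serv : U -> S) (T : U -> {set V}) (w : U -> R)
    (x : S -> V -> R) (y : U -> R) (beta : R)
    (L : finType) (nu : L -> V) (kappa : L -> nat)
    (ord : seq L) (psi : {ffun L -> S}) :
  (forall i, 0 < s i) ->
  (forall j, 0 < c j) ->
  (forall k, 0 < w k) ->
  LP_optimal s c serv T w x y ->
  beta < 1 ->
  (forall i j, s i <= beta * c j) ->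
  valid_slots s c x beta nu kappa ->
  uniq ord -> (forall sg, sg \in ord) ->
  SA1_output s c serv T w x beta nu kappa ord psi ->
  exp_random s c serv T w x beta nu kappa
    <= total_reward serv T w (placement nu psi).
Proof.
move=> _ _ _ Hopt _ _ Hv Hu Hall Hsa.
exact: (@main R S V U s c serv T w x beta L nu kappa y ord psi Hopt Hv Hu Hall Hsa).
Qed.
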